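(* Let $P,Q,R_0,R_1$ be integers with $PQ\neq 0$, $\Delta:=P^2-4Q\neq 0$, $|R_0|+|R_1|>0$ and $\gcd(P,Q)=\gcd(R_1,Q)=1$, and let $(R_n)_{n\ge 0}$ be defined by $R_{n+2}=PR_{n+1}-QR_n$ for all $n\geq 0$. Assume $\alpha/\beta$ is not a root of unity, where $\alpha,\beta$ are the roots of $x^2-Px+Q$. Let $n$ and $k$ be positive integers with $n\geq k$. Then the integer $L_{k,n}:=\mathrm{lcm}(R_k,R_{k+1},\dots,R_n)$ is a multiple of the rational number \[\frac{R_kR_{k+1}\cdots R_n}{[n-k]_{\boldsymbol{U}}!\,\left(\gcd(R_0,R_1)\right)^{n-k}},\] i.e. $L_{k,n}$ divided by this rational number is an integer.
   Context: $\alpha,\beta$ are the two distinct roots of $x^2-Px+Q$, labelled so that $|\alpha|\ge|\beta|$. The Lucas sequence is $U_n=(\alpha^n-\beta^n)/(\alpha-\beta)$ ($n\ge 0$), equivalently $U_0=0,U_1=1,U_{n+2}=PU_{n+1}-QU_n$. For $j\ge 0$, $[j]_{\boldsymbol{U}}!:=U_1U_2\cdots U_j$ with $[0]_{\boldsymbol{U}}!=1$. *)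

(* Defs.v *)
From mathcomp Require Import all_boot all_order all_algebra all_field.
Set Implicit Arguments. Unset Strict Implicit. Unset Printing Implicit Defensive.
Import Order.TTheory GRing.Theory Num.Theory.
Local Open Scope ring_scope.

Fixpoint lucasU (P Q : int) (n : nat) : int :=
  match n with
  | 0%N => 0
  | S n1 => match n1 with
            | 0%N => 1
            | S m => P * lucasU P Q n1 - Q * lucasU P Q m
            end
  end.

Definition lucas_fact (P Q : int) (j : nat) : int :=
  \prod_(1 <= i < j.+1) lucasU P Q i.

(* lcm(R_k, ..., R_n) (nonnegative; equals 0 if some R_i = 0). *)
Definition lcm_range (R : nat -> int) (k n : nat) : int :=
  \big[lcmz/1]_(k <= i < n.+1) R i.

(* Main.v *)
Require Import Defs.
From mathcomp Require Import all_boot all_order all_algebra all_field.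
From mathcomp Require Import ring lra.
Import Order.TTheory GRing.Theory Num.Theory.
Local Open Scope ring_scope.

Lemma lucasUS P Q m : lucasU P Q m.+2 = P * lucasU P Q m.+1 - Q * lucasU P Q m.
Proof. by []. Qed.

Lemma lucas_binet (P Q : int) (a b : algC) :
  a + b = P%:~R -> a * b = Q%:~R ->
  forall n, (lucasU P Q n)%:~R * (a - b) = a ^+ n - b ^+ n.
Proof.
move=> hs hp.
suff H : forall n, (lucasU P Q n)%:~R * (a - b) = a ^+ n - b ^+ n /\
                   (lucasU P Q n.+1)%:~R * (a - b) = a ^+ n.+1 - b ^+ n.+1.
  by move=> n; case: (H n).
elim=> [|n [IH1 IH2]]; first by split => /=; rewrite ?mul0r ?subrr ?mul1r ?expr1.
split=> //.
rewrite lucasUS rmorphB !rmorphM /= mulrBl -!mulrA IH1 IH2 -hs -hp.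
rewrite !exprS; ring.
Qed.

Lemma lucasU_neq0 (P Q : int) (hPQ : P * Q != 0) (hDelta : P ^+ 2 - 4 * Q != 0)
  (hnotroot : forall alpha beta : algC,
      alpha ^+ 2 - P%:~R * alpha + Q%:~R = 0 ->
      beta ^+ 2 - P%:~R * beta + Q%:~R = 0 ->
      alpha != beta ->
      forall m : nat, (0 < m)%N -> (alpha / beta) ^+ m != 1)
  i : (0 < i)%N -> lucasU P Q i != 0.
Proof.
move=> hi.
have hQ : Q != 0 by move: hPQ; rewrite mulf_eq0 negb_or => /andP[].
set d : algC := sqrtC ((P ^+ 2 - 4 * Q)%:~R).
have hc : ((P ^+ 2 - 4 * Q)%:~R : algC) = P%:~R ^+ 2 - 4 * Q%:~R.
  by rewrite rmorphB /= !rmorphM /= expr2 rmorph_nat.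
have hd : d ^+ 2 = P%:~R ^+ 2 - 4 * Q%:~R by rewrite sqrtCK hc.
have hd0 : d != 0.
  apply/eqP => h0; move: hd; rewrite h0 expr0n /= => /eqP.
  rewrite eq_sym subr_eq0 => /eqP h.
  move/eqP: hDelta; apply.
  apply/eqP; rewrite -(intr_eq0 algC) hc h subrr //.
set a : algC := (P%:~R + d) / 2.
set b : algC := (P%:~R - d) / 2.
have h2 : (2 : algC) != 0 by rewrite pnatr_eq0.
have hs : a + b = P%:~R by rewrite /a /b; field.
have hp : a * b = Q%:~R.
  have -> : a * b = (P%:~R ^+ 2 - d ^+ 2) / 4 by rewrite /a /b; field.
  by rewrite hd; field.
have hab : a - b = d by rewrite /a /b; field.
have hra : a ^+ 2 - P%:~R * a + Q%:~R = 0.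
  by rewrite -hs -hp; ring.
have hrb : b ^+ 2 - P%:~R * b + Q%:~R = 0.
  by rewrite -hs -hp; ring.
have hne : a != b by rewrite -subr_eq0 hab.
have hb0 : b != 0.
  apply/eqP => hb; move: hp; rewrite hb mulr0 => /esym/eqP; rewrite intr_eq0.
  by rewrite (negbTE hQ).
apply/negP => /eqP hU.
have := lucas_binet P Q a b hs hp i; rewrite hU rmorph0 mul0r => /esym/eqP; rewrite subr_eq0 => /eqP hab'.
have := hnotroot a b hra hrb hne i hi.
by rewrite expr_div_n hab' divff ?eqxx // expf_neq0.
Qed.
Lemma bez (P Q : int) (R : nat -> int)
  (hrec : forall m : nat, R m.+2 = P * R m.+1 - Q * R m) k :
  exists x y : int, x * R k + y * R k.+1 = gcdz (R 0%N) (R 1%N) * Q ^+ k.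
Proof.
elim: k => [|k [x [y IH]]].
  case: (Bezoutz (R 0%N) (R 1%N)) => u [v huv].
  by exists u, v; rewrite expr0 mulr1.
exists (x * P + y * Q), (- x).
rewrite hrec exprS mulrCA -IH; ring.
Qed.

Lemma shiftR (P Q : int) (R : nat -> int)
  (hrec : forall m : nat, R m.+2 = P * R m.+1 - Q * R m) k m :
  R (k + m.+1)%N = lucasU P Q m.+1 * R k.+1 - Q * lucasU P Q m * R k.
Proof.
suff H : forall m, R (k + m.+1)%N = lucasU P Q m.+1 * R k.+1 - Q * lucasU P Q m * R k /\
   R (k + m.+2)%N = lucasU P Q m.+2 * R k.+1 - Q * lucasU P Q m.+1 * R k.
  by case: (H m).
elim=> [|j [IH1 IH2]].
  have U0 : lucasU P Q 0 = 0 by [].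
  have U1 : lucasU P Q 1 = 1 by [].
  rewrite !addnS !addn0 hrec lucasUS U0 U1; split; ring.
split=> //.
rewrite !addnS hrec -!addnS IH1 IH2 (lucasUS P Q j.+1) (lucasUS P Q j); ring.
Qed.

Lemma combo (P Q : int) (R : nat -> int)
  (hrec : forall m : nat, R m.+2 = P * R m.+1 - Q * R m) k m :
  exists x y : int, x * R (k + m.+1)%N + y * R k =
     lucasU P Q m.+1 * (gcdz (R 0%N) (R 1%N) * Q ^+ k).
Proof.
case: (bez P Q R hrec k) => x [y hxy].
exists y, (lucasU P Q m.+1 * x + y * Q * lucasU P Q m).
rewrite -hxy (shiftR P Q R hrec); ring.
Qed.

Lemma coprimeR (P Q : int) (R : nat -> int)
  (hrec : forall m : nat, R m.+2 = P * R m.+1 - Q * R m)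
  (hgPQ : gcdz P Q = 1) (hgR1Q : gcdz (R 1%N) Q = 1) i :
  coprimez (R i.+1) Q.
Proof.
have [t ->] : exists t, R i.+1 = P ^+ i * R 1%N + t * Q.
  elim: i => [|i [t IH]]; first by exists 0; rewrite expr0 mul1r mul0r addr0.
  exists (P * t - R i); rewrite hrec IH exprS; ring.
rewrite /coprimez gcdzC addrC gcdzMDl gcdzC.
have : coprimez (P ^+ i * R 1%N) Q.
  by rewrite coprimezMl coprimezXl ?andbT /coprimez ?hgPQ ?hgR1Q.
by [].
Qed.

Definition Tp (R : nat -> int) k m := \prod_(k <= i < k + m.+1) R i.
Definition Good (R : nat -> int) k m (X : int) := forall L : int,
  (forall i, (k <= i <= k + m)%N -> (R i %| L)%Z) -> (Tp R k m %| L * X)%Z.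

Lemma TpR R k m : Tp R k m.+1 = Tp R k m * R (k + m.+1)%N.
Proof. by rewrite /Tp [(k + m.+2)%N]addnS big_nat_recr // leq_addr. Qed.

Lemma TpL R k m : Tp R k m.+1 = R k * Tp R k.+1 m.
Proof. by rewrite /Tp big_ltn ?addSn ?addnS // ltnS (leq_trans (leq_addr m k) (leqnSn _)). Qed.

Lemma lfS P Q m : lucas_fact P Q m.+1 = lucas_fact P Q m * lucasU P Q m.+1.
Proof. by rewrite /lucas_fact big_nat_recr. Qed.

Lemma good_main (P Q : int) (R : nat -> int)
  (hrec : forall m : nat, R m.+2 = P * R m.+1 - Q * R m) m :
  forall k, exists e : nat,
    Good R k m (lucas_fact P Q m * gcdz (R 0%N) (R 1%N) ^+ m * Q ^+ e).
Proof.
elim: m => [|m IH] k.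
  exists 0%N => L hL.
  rewrite /lucas_fact big_geq // /Tp addn1 big_nat1 !expr0 !mulr1.
  by apply: hL; rewrite addn0 leqnn.
case: (IH k) => e1 h1; case: (IH k.+1) => e2 h2.
case: (combo P Q R hrec k m) => x [y hxy].
exists (e1 + e2 + k)%N => L hL.
set g := gcdz (R 0%N) (R 1%N).
set A := lucas_fact P Q m * g ^+ m.
have H1 : (Tp R k m %| L * (A * Q ^+ e1))%Z.
  apply: h1 => i /andP[hi1 hi2]; apply: hL; rewrite hi1 /=.
  by apply: (leq_trans hi2); rewrite leq_add2l.
have H2 : (Tp R k.+1 m %| L * (A * Q ^+ e2))%Z.
  apply: h2 => i /andP[hi1 hi2]; apply: hL; rewrite (ltnW hi1) /=.
  by rewrite (leq_trans hi2) // addSn -addnS.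
have -> : L * (lucas_fact P Q m.+1 * g ^+ m.+1 * Q ^+ (e1 + e2 + k)) =
   (L * (A * Q ^+ e1) * R (k + m.+1)%N) * (x * Q ^+ e2) +
   (R k * (L * (A * Q ^+ e2))) * (y * Q ^+ e1).
  have -> : lucas_fact P Q m.+1 * g ^+ m.+1 * Q ^+ (e1 + e2 + k) =
     A * Q ^+ e1 * Q ^+ e2 * (lucasU P Q m.+1 * (g * Q ^+ k)).
    by rewrite lfS !exprD exprS /A; ring.
  rewrite -hxy; ring.
apply: rpredD; apply: dvdz_mulr.
  by rewrite TpR; apply: dvdz_mul.
by rewrite TpL; apply: dvdz_mul.
Qed.

Lemma dvdz_lcm_seq (R : nat -> int) s i : i \in s ->
  (R i %| \big[lcmz/1]_(j <- s) R j)%Z.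
Proof.
elim: s => [//|a s IH]; rewrite inE big_cons => /orP[/eqP -> | hi].
  exact: dvdz_lcml.
exact: dvdz_trans (IH hi) (dvdz_lcmr _ _).
Qed.

Theorem theorem1 (P Q : int) (R : nat -> int)
  (hPQ : P * Q != 0)
  (hDelta : P ^+ 2 - 4 * Q != 0)
  (hR01 : 0 < `|R 0%N| + `|R 1%N|)
  (hgPQ : gcdz P Q = 1)
  (hgR1Q : gcdz (R 1%N) Q = 1)
  (hrec : forall m : nat, R m.+2 = P * R m.+1 - Q * R m)
  (hnotroot : forall alpha beta : algC,
      alpha ^+ 2 - P%:~R * alpha + Q%:~R = 0 ->
      beta ^+ 2 - P%:~R * beta + Q%:~R = 0 ->
      alpha != beta ->
      forall m : nat, (0 < m)%N -> (alpha / beta) ^+ m != 1)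
  (n k : nat) (hk : (0 < k)%N) (hkn : (k <= n)%N) :
  exists z : int,
    ((lcm_range R k n)%:~R : rat) =
      z%:~R * (((\prod_(k <= i < n.+1) R i)%:~R : rat)
               / ((lucas_fact P Q (n - k))%:~R * ((gcdz (R 0%N) (R 1%N))%:~R) ^+ (n - k))).
Proof.
set m := (n - k)%N.
set g := gcdz (R 0%N) (R 1%N).
set L := lcm_range R k n.
set T := \prod_(k <= i < n.+1) R i.
have hT : Tp R k m = T by rewrite /Tp /T /m addnS subnKC.
case: (good_main P Q R hrec m k) => e hG.
have := hG L; rewrite hT => hd.
have {hd} hd : (T %| L * (lucas_fact P Q m * g ^+ m * Q ^+ e))%Z.
  apply: hd => i hi; rewrite /L /lcm_range; apply: dvdz_lcm_seq.
  by rewrite mem_index_iota ltnS; move: hi; rewrite /m subnKC.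
have hcop : coprimez T Q.
  rewrite /T big_seq; apply: (big_ind (fun x => coprimez x Q)).
  - by rewrite /coprimez gcdzC gcdz1.
  - by move=> a b ha hb; rewrite coprimezMl ha hb.
  move=> i; rewrite mem_index_iota => /andP[hi _].
  case: i hi => [|i] hi; first by rewrite leqn0 in hi; rewrite (eqP hi) in hk.
  exact: coprimeR.
rewrite mulrA Gauss_dvdzl in hd; last by rewrite coprimezXr.
case/dvdzP: hd => w hw.
exists w.
have hF : ((lucas_fact P Q m)%:~R * (g%:~R) ^+ m : rat) != 0.
  apply: mulf_neq0; last first.
    apply: expf_neq0; rewrite intr_eq0 gcdz_eq0 negb_and.
    move: hR01; case: (R 0%N =P 0) => [-> |//] /=.
    by rewrite normr0 add0r normr_gt0.
  rewrite intr_eq0 /lucas_fact prodf_seq_neq0; apply/allP => i.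
  rewrite mem_index_iota => /andP[hi _] /=.
  exact: lucasU_neq0.
have heq : (L%:~R * ((lucas_fact P Q m)%:~R * (g%:~R) ^+ m) : rat) = w%:~R * T%:~R.
  by rewrite -rmorphXn -!rmorphM /= hw.
by rewrite mulrA -heq mulfK.
Qed.
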